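(* Let $\mathcal F=\{F_1,\dots,F_k\}$, $\mathcal I=\{0,1\}^k\setminus\{(0,\dots,0)\}$, and let $\mathcal F_{asc}$ be a nonempty ascending class of nonempty subsets of $\mathcal F$. Let $\mathbf A$ be the matrix with rows indexed by $\mathcal F_{des}=2^{\mathcal F}\setminus\mathcal F_{asc}\setminus\{\varnothing\}$ and columns indexed by $\mathcal I$, with entry $1$ in row $W$, column $\boldsymbol i$ if $W\subseteq\phi(\boldsymbol i)$ and $0$ otherwise. Then the hierarchical AS model $HAS(\mathcal F_{asc})$ is the relational model generated by $\mathbf A$, i.e. $HAS(\mathcal F_{asc})=\{\boldsymbol p>0 \text{ probability distribution on }\mathcal I:\ \log\boldsymbol p=\mathbf A^\top\boldsymbol\beta\text{ for some }\boldsymbol\beta\}$, and this relational model has no overall effect: the all-ones vector of length $2^k-1$ does not belong to the row space of $\mathbf A$.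
   Context: For $\boldsymbol i\in\mathcal I$, $\phi(\boldsymbol i)$ is the set of features whose coordinate in $\boldsymbol i$ equals $1$; write $p(V)$ for the probability of the cell with $\phi(\boldsymbol i)=V$. A class of subsets is ascending if it is closed under taking supersets within $\mathcal F$. For nonempty $V\subseteq\mathcal F$, $\mathrm{CASR}(V\mid\mathcal F\setminus V=\mathbf 0)=\prod_{\varnothing\ne U\subseteq V,\,|U|\equiv|V|\,(2)}p(U)\big/\prod_{\varnothing\ne U\subseteq V,\,|U|\not\equiv|V|\,(2)}p(U)$ (called $\mathrm{ASR}(\mathcal F)$ when $V=\mathcal F$). The hierarchical Aitchison–Silvey model $HAS(\mathcal F_{asc})$ is the set of strictly positive probability distributions $\boldsymbol p$ on $\mathcal I$ with $\mathrm{CASR}(V\mid\mathcal F\setminus V=\mathbf 0)=1$ for all $V\in\mathcal F_{asc}$; equivalently, writing $\log p(\boldsymbol i)=\sum_{\varnothing\ne V\subseteq\phi(\boldsymbol i)}\beta_V$ (a bijective reparameterization), those with $\beta_V=0$ for all $V\in\mathcal F_{asc}$. *)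

(* Defs.v *)
From mathcomp Require Import all_boot all_order all_algebra.
From mathcomp Require Import reals exp.
Set Implicit Arguments. Unset Strict Implicit. Unset Printing Implicit Defensive.
Import Order.TTheory GRing.Theory Num.Theory.
Local Open Scope ring_scope.

(* Features F_1..F_k are 'I_k.  A cell i in I = {0,1}^k \ {0} is identified with
   its feature set phi(i) : {set 'I_k}, which is nonempty.  A distribution is a
   function p : {set 'I_k} -> R, only its values on nonempty sets matter. *)

Definition cell k (V : {set 'I_k}) : bool := V != set0.

Definition pos_prob (R : realType) k (p : {set 'I_k} -> R) : Prop :=
  (forall V : {set 'I_k}, cell V -> 0 < p V) /\
  \sum_(V : {set 'I_k} | cell V) p V = 1.

Definition ascending k (Fasc : {set {set 'I_k}}) : Prop :=
  forall U V : {set 'I_k}, U \in Fasc -> U \subset V -> V \in Fasc.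

Definition CASR (R : realType) k (p : {set 'I_k} -> R) (V : {set 'I_k}) : R :=
  (\prod_(U : {set 'I_k} | (U != set0) && (U \subset V) &&
          (odd #|U| == odd #|V|)) p U) /
  (\prod_(U : {set 'I_k} | (U != set0) && (U \subset V) &&
          (odd #|U| != odd #|V|)) p U).

Definition HAS (R : realType) k (Fasc : {set {set 'I_k}}) (p : {set 'I_k} -> R)
  : Prop :=
  pos_prob p /\ forall V, V \in Fasc -> CASR p V = 1.

Definition Fdes k (Fasc : {set {set 'I_k}}) : {set {set 'I_k}} :=
  [set W : {set 'I_k} | (W \notin Fasc) && (W != set0)].

Definition Amat (R : realType) k (W V : {set 'I_k}) : R := (W \subset V)%:R.

Definition relational_model (R : realType) k (Fasc : {set {set 'I_k}})
  (p : {set 'I_k} -> R) : Prop :=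
  pos_prob p /\
  exists beta : {set 'I_k} -> R,
    forall V : {set 'I_k}, cell V ->
      ln (p V) = \sum_(W in Fdes Fasc) Amat R W V * beta W.

Definition ones_in_rowspace (R : realType) k (Fasc : {set {set 'I_k}}) : Prop :=
  exists c : {set 'I_k} -> R,
    forall V : {set 'I_k}, cell V -> \sum_(W in Fdes Fasc) c W * Amat R W V = 1.

(* Main.v *)
Require Import Defs.
From mathcomp Require Import all_boot all_order all_algebra.
From mathcomp Require Import reals exp lra.
Import Order.TTheory GRing.Theory Num.Theory.
Local Open Scope ring_scope.

Section M.
Variables (R : realType) (k : nat).


Lemma K0 (T V : {set 'I_k}) (x : 'I_k) (c : nat) : x \in V -> x \notin T ->
  \sum_(U : {set 'I_k} | (T \subset U) && (U \subset V)) (-1) ^+ (#|U| + c) = 0 :> R.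
Proof.
move=> xV xT.
pose t := fun U : {set 'I_k} => if x \in U then U :\ x else x |: U.
have tK : involutive t.
  move=> U; rewrite /t; case xU: (x \in U); rewrite !inE eqxx /=.
    by rewrite setD1K.
  by rewrite setU1K ?xU.
set S := (X in X = 0).
have : S = - S.
  rewrite {1}/S (reindex_inj (inv_inj tK)) -sumrN.
  apply: eq_big => U.
    rewrite /t; case: ifP => xU.
      by rewrite subsetD1 xT andbT -{4}(setD1K xU) subUset sub1set xV.
    have e : (T \subset x |: U) = (T \subset (x |: U) :\ x).
      by rewrite subsetD1 xT andbT.
    by rewrite e setU1K ?xU // subUset sub1set xV.
  move=> _; rewrite /t; case: ifP => xU.
    by rewrite (cardsD1 x U) xU add1n addSn exprS mulN1r opprK.
  by rewrite cardsU1 xU add1n addSn exprS mulN1r.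
rewrite -/S; lra.
Qed.

Lemma K1 (T V : {set 'I_k}) (c : nat) : T \subset V ->
  \sum_(U : {set 'I_k} | (T \subset U) && (U \subset V)) (-1) ^+ (#|U| + c)
  = if T == V then (-1) ^+ (#|V| + c) else 0 :> R.
Proof.
move=> TV; case: eqP => [->|/eqP nTV].
  by rewrite (big_pred1 V) // => U /=; rewrite eqEsubset andbC.
have : ~~ (V \subset T) by rewrite eqEsubset TV in nTV.
by case/subsetPn => x xV xT; apply: K0 xV xT.
Qed.

Lemma condE (T U V : {set 'I_k}) : T != set0 ->
  ((U != set0) && (U \subset V)) && ((T != set0) && (T \subset U))
  = (T \subset U) && (U \subset V).
Proof.
move=> T0; rewrite T0 /=; case TU: (T \subset U); rewrite ?andbF ?andbT //=.
case: eqP => // U0; move: TU; rewrite U0 subset0 => /eqP T0'.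
by rewrite T0' eqxx in T0.
Qed.

Lemma sgnnn n : (-1) ^+ (n + n) = 1 :> R.
Proof. by rewrite -signr_odd addnn odd_double expr0. Qed.

Lemma Mob1 (h : {set 'I_k} -> R) (V : {set 'I_k}) : V != set0 ->
  \sum_(U : {set 'I_k} | (U != set0) && (U \subset V))
     (-1) ^+ (#|U| + #|V|) * (\sum_(T : {set 'I_k} | (T != set0) && (T \subset U)) h T)
  = h V.
Proof.
move=> V0.
under eq_bigr do rewrite mulr_sumr.
rewrite (exchange_big_dep (fun T : {set 'I_k} => (T != set0) && (T \subset V))) /=;
  last first.
  by move=> U T /andP[_ UV] /andP[T0 TU]; rewrite T0 (subset_trans TU UV).
rewrite (bigD1 V) /=; last by rewrite V0 subxx.
rewrite [X in _ + X]big1 ?addr0.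
  rewrite -mulr_suml (eq_bigl _ _ (fun U => condE V U V V0)) K1 // eqxx sgnnn.
  by rewrite mul1r.
move=> T /andP[/andP[T0 TV] nTV].
rewrite -mulr_suml (eq_bigl _ _ (fun U => condE T U V T0)) K1 // (negbTE nTV).
by rewrite mul0r.
Qed.

Lemma Mob2 (g : {set 'I_k} -> R) (V : {set 'I_k}) : V != set0 ->
  \sum_(U : {set 'I_k} | (U != set0) && (U \subset V))
     (\sum_(T : {set 'I_k} | (T != set0) && (T \subset U)) (-1) ^+ (#|T| + #|U|) * g T)
  = g V.
Proof.
move=> V0.
rewrite (exchange_big_dep (fun T : {set 'I_k} => (T != set0) && (T \subset V))) /=;
  last first.
  by move=> U T /andP[_ UV] /andP[T0 TU]; rewrite T0 (subset_trans TU UV).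
rewrite (bigD1 V) /=; last by rewrite V0 subxx.
rewrite [X in _ + X]big1 ?addr0.
  rewrite -mulr_suml (eq_bigl _ _ (fun U => condE V U V V0)).
  under eq_bigr do rewrite addnC.
  by rewrite K1 // eqxx sgnnn mul1r.
move=> T /andP[/andP[T0 TV] nTV].
rewrite -mulr_suml (eq_bigl _ _ (fun U => condE T U V T0)).
under eq_bigr do rewrite addnC.
by rewrite K1 // (negbTE nTV) mul0r.
Qed.

Lemma lnprod (P : pred {set 'I_k}) (F : {set 'I_k} -> R) :
  (forall U, P U -> 0 < F U) ->
  0 < \prod_(U | P U) F U /\ ln (\prod_(U | P U) F U) = \sum_(U | P U) ln (F U).
Proof.
move=> Fp; apply: (big_rec2 (fun a b => 0 < a /\ ln a = b)); first by rewrite ln1.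
move=> U a b PU [a0 <-]; split; first by rewrite mulr_gt0 ?Fp.
by rewrite lnM // posrE ?Fp.
Qed.

Lemma lnCASR (p : {set 'I_k} -> R) (V : {set 'I_k}) :
  (forall U : {set 'I_k}, U != set0 -> 0 < p U) ->
  0 < CASR p V /\
  ln (CASR p V) = \sum_(U : {set 'I_k} | (U != set0) && (U \subset V))
                    (-1) ^+ (#|U| + #|V|) * ln (p U).
Proof.
move=> pp.
have [A0 lnA] := lnprod (fun U : {set 'I_k} => (U != set0) && (U \subset V) &&
          (odd #|U| == odd #|V|)) p (fun U h => pp U (proj1 (andP (proj1 (andP h))))).
have [B0 lnB] := lnprod (fun U : {set 'I_k} => (U != set0) && (U \subset V) &&
          (odd #|U| != odd #|V|)) p (fun U h => pp U (proj1 (andP (proj1 (andP h))))).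
split; first by rewrite /CASR divr_gt0.
rewrite /CASR ln_div ?posrE // lnA lnB [RHS](bigID (fun U : {set 'I_k} => odd #|U| == odd #|V|)) /=.
rewrite -sumrN; congr (_ + _); apply: eq_bigr => U /andP[_ hU];
  rewrite -signr_odd oddD; move: hU; case: (odd #|U|); case: (odd #|V|) => //= _;
  by rewrite ?mul1r ?mulN1r ?expr0 ?expr1.
Qed.

Lemma LA (Fasc : {set {set 'I_k}}) (b : {set 'I_k} -> R) (V : {set 'I_k}) :
  \sum_(W in Fdes Fasc) Amat R W V * b W =
  \sum_(W : {set 'I_k} | (W != set0) && (W \subset V)) (if W \in Fdes Fasc then b W else 0).
Proof.
rewrite big_mkcond [RHS]big_mkcond; apply: eq_bigr => W _.
rewrite /Amat /Fdes inE.
case: (W \in Fasc); case: (W == set0); case: (W \subset V) => /=;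
  by rewrite ?mul1r ?mul0r.
Qed.

End M.

Theorem theorem4 (R : realType) (k : nat) (Fasc : {set {set 'I_k}}) :
  Fasc != set0 ->
  (forall U, U \in Fasc -> U != set0) ->
  ascending Fasc ->
  (forall p : {set 'I_k} -> R, HAS Fasc p <-> relational_model Fasc p) /\
  ~ ones_in_rowspace R Fasc.
Proof.
move=> Fn0 Fnz _; split.
  move=> p; split.
    case=> [[pp psum] hC]; split => //.
    exists (fun W => ln (CASR p W)) => V V0.
    rewrite LA.
    transitivity (\sum_(W : {set 'I_k} | (W != set0) && (W \subset V)) ln (CASR p W)).
      rewrite -(@Mob2 R k (fun U => ln (p U)) V V0); apply: eq_bigr => U /andP[U0 _].
      by rewrite (proj2 (@lnCASR R k p U pp)).
    apply: eq_bigr => W /andP[W0 _]; rewrite /Fdes inE W0 andbT.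
    by case: ifP => // /negbFE /hC ->; rewrite ln1.
  case=> [[pp psum] [beta hb]]; split; first by split. move=> V VF.
  have V0 := Fnz V VF.
  have [C0 lnC] := @lnCASR R k p V pp.
  apply/eqP; rewrite -(ln_eq0 C0) lnC.
  rewrite -[X in _ == X](_ : (if V \in Fdes Fasc then beta V else 0) = 0); last first.
    by rewrite /Fdes inE VF.
  rewrite -(@Mob1 R k (fun W => if W \in Fdes Fasc then beta W else 0) V V0).
  apply/eqP; apply: eq_bigr => U /andP[U0 _]; by rewrite hb // -LA.
case=> c hc.
case/set0Pn: Fn0 => V VF.
have V0 := Fnz V VF.
have h1 : forall U : {set 'I_k}, U != set0 ->
    \sum_(T : {set 'I_k} | (T != set0) && (T \subset U))
       (if T \in Fdes Fasc then c T else 0) = 1.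
  move=> U U0; rewrite -LA -(hc U U0); apply: eq_bigr => W _; exact: mulrC.
have := @Mob1 R k (fun W => if W \in Fdes Fasc then c W else 0) V V0.
rewrite /= {2}/Fdes inE VF /=.
under eq_bigr => U /andP[U0 _] do rewrite h1 // mulr1.
have := @K1 R k set0 V #|V| (sub0set V).
rewrite eq_sym (negbTE V0) (bigD1 set0) /=; last by rewrite !sub0set.
move=> e1 e2; move: e1.
have -> : \sum_(U : {set 'I_k} | ((set0 \subset U) && (U \subset V)) && (U != set0))
   (-1) ^+ (#|U| + #|V|) = 0 :> R.
  by rewrite -[RHS]e2; apply: eq_bigl => U; rewrite sub0set /= andbC.
rewrite addr0 cards0 add0n => /eqP.
by rewrite signr_eq0.
Qed.
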